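(* Let $(q(\ell))_{\ell\in\mathbb{Z}}\subset\mathbb{C}$ and $(p(\ell,z))_{(\ell,z)\in\mathbb{Z}^2}\subset\mathbb{C}$ satisfy $q(\ell)=0$ for all $\ell<0$ and $p(\ell,z)=0$ for all $\ell\in\mathbb{Z}$, $z<0$. Define the iterates $q(\ell,0):=\ddot r(\ell)$ and $q(\ell,m):=\ddot r(\ell)+\sum_{z\in\mathbb{Z}}q(\ell-z,m-1)\ddot p_+(\ell,z)$ for $(\ell,m)\in\mathbb{Z}\times\mathbb{N}$. Then for each $(\ell,m)\in\mathbb{Z}\times\mathbb{N}_0$, $$q(\ell,m)=\sum_{z\in\mathbb{Z}}\ddot r(\ell-z)\,\alpha\{\ddot p_+\}(\ell,z,m).$$
   Context: $r(\ell):=\sum_{z\in\mathbb{Z}}q(\ell-z)p(\ell,z)$. $L_0:=\sup\{L\in\mathbb{N}_0:p(\ell,0)\neq0\text{ for all }0\le\ell<L\}\in\mathbb{N}_0\cup\{\infty\}$, assumed $\ge1$; $\mathbb{L}:=\{\ell\in\mathbb{Z}:0\le\ell<L_0\}$. $\ddot r(\ell):=\frac{r(\ell)}{p(\ell,0)}\mathbf 1_{\mathbb{L}}(\ell)$, $\ddot p_+(\ell,z):=\big(\delta_{z,0}-\frac{p(\ell,z)}{p(\ell,0)}\big)\mathbf 1_{\mathbb{L}}(\ell)$ ($\delta_{z,0}=1$ if $z=0$, else $0$). Convolution powers: $\ddot p_+^{*0}(\ell,z):=\delta_{z,0}$, $\ddot p_+^{*j}(\ell,z):=\sum_{z_1\in\mathbb{Z}}\ddot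 p_+(\ell,z_1)\ddot p_+^{*(j-1)}(\ell-z_1,z-z_1)$ for $j\ge1$. $\alpha\{\ddot p_+\}(\ell,z,x):=\sum_{j=0}^{\lfloor x\rfloor}\ddot p_+^{*j}(\ell,z)$ for $(\ell,z,x)\in\mathbb{Z}^2\times\mathbb{R}$. *)

(* Defs.v *)
From HB Require Import structures.
From mathcomp Require Import all_boot all_order all_algebra.
From mathcomp Require Import all_classical all_reals.
From mathcomp Require Import complex.
Set Implicit Arguments. Unset Strict Implicit. Unset Printing Implicit Defensive.
Import Order.TTheory GRing.Theory Num.Theory.
Local Open Scope classical_set_scope.
Local Open Scope ring_scope.

Section Defs.
Variable R : realType.
Local Notation C := (R[i])%C.

(* Sum over z in Z, of a finitely supported family (fsbigop: 0 if the support is infinite). *)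
Definition zsum (f : int -> C) : C := \sum_(z \in [set: int]) f z.

Variables (q : int -> C) (p : int -> int -> C).

Definition r (l : int) : C := zsum (fun z => q (l - z) * p l z).

(* l \in LL  <->  0 <= l < L_0, where L_0 = sup{L : p(k,0) <> 0 for all 0 <= k < L} *)
Definition inLL (l : int) : bool :=
  (0 <= l) && [forall k : 'I_(`|l|%N.+1), p (k%:Z) 0 != 0].

Definition ind (b : bool) : C := if b then 1 else 0.

Definition rdd (l : int) : C := r l / p l 0 * ind (inLL l).

Definition pdd (l z : int) : C := (ind (z == 0) - p l z / p l 0) * ind (inLL l).

Fixpoint pconv (j : nat) (l z : int) : C :=
  match j with
  | 0 => ind (z == 0)
  | j'.+1 => zsum (fun z1 => pdd l z1 * pconv j' (l - z1) (z - z1))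
  end.

Definition alpha (l z : int) (x : R) : C :=
  if 0 <= x then \sum_(j < (Num.truncn x).+1) pconv j l z else 0.

Fixpoint qit (m : nat) (l : int) : C :=
  match m with
  | 0 => rdd l
  | m'.+1 => rdd l + zsum (fun z => qit m' (l - z) * pdd l z)
  end.

End Defs.

(* Main.v *)
Require Import Defs.
From HB Require Import structures.
From mathcomp Require Import all_boot all_order all_algebra.
From mathcomp Require Import all_classical all_reals.
From mathcomp Require Import complex.
From mathcomp Require Import zify.
Import Order.TTheory GRing.Theory Num.Theory.
Local Open Scope ring_scope.

Section S.
Variable R : realType.
Local Notation C := (R[i])%C.

Lemma zsum_range (f : int -> C) (a : int) (N : nat) :
  (forall z, (z < a) || (a + N%:Z < z) -> f z = 0) ->
  zsum f = \sum_(i < N.+1) f (a + i%:Z).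
Proof.
move=> hf; rewrite /zsum.
rewrite -(fsbig_widen [set` [seq a + i%:Z | i <- iota 0 N.+1]] [set: int] f) //; last first.
  move=> z [_ hz]; apply: hf.
  apply: contra_notT hz; rewrite negb_or -!leNgt => /andP[h1 h2].
  apply/mapP; exists `|z - a|%N.
    rewrite mem_iota; lia.
  lia.
rewrite -fsbig_seq; last first.
  rewrite map_inj_uniq ?iota_uniq // => i j /addrI [].
  by [].
by rewrite big_map -(subn0 N.+1) -/(index_iota 0 N.+1) big_mkord.
Qed.

Lemma zsum_shift (f : int -> C) (c : int) : zsum (fun z => f (z + c)) = zsum f.
Proof.
rewrite /zsum (reindex_fsbigT (fun z => z + c) f) //.
by exists (fun z => z - c) => z; rewrite ?addrK ?subrK.
Qed.

Variables (q : int -> C) (p : int -> int -> C).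
Hypothesis hp : forall l z : int, z < 0 -> p l z = 0.

Lemma rdd_neg l : l < 0 -> rdd q p l = 0.
Proof. by move=> hl; rewrite /rdd /inLL leNgt hl /= /ind mulr0. Qed.

Lemma pdd_negl l z : l < 0 -> pdd p l z = 0.
Proof. by move=> hl; rewrite /pdd /inLL leNgt hl /= /ind mulr0. Qed.

Lemma pdd_negz l z : z < 0 -> pdd p l z = 0.
Proof. by move=> hz; rewrite /pdd hp // mul0r lt_eqF // /ind subr0 mul0r. Qed.

Lemma pconv_neg j : forall l z, z < 0 -> pconv p j l z = 0.
Proof.
elim: j => [|j IH] l z hz /=; first by rewrite lt_eqF.
rewrite /zsum fsbig1 // => z1 _; case: (ltrP z1 0) => h.
  by rewrite pdd_negz // mul0r.
by rewrite IH ?mulr0 //; lia.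
Qed.

Lemma qit_neg m l : l < 0 -> qit q p m l = 0.
Proof.
move=> hl; case: m => [|m] /=; rewrite rdd_neg // add0r.
by rewrite /zsum fsbig1 // => z _; rewrite pdd_negl // mulr0.
Qed.

Definition F l z m := \sum_(j < m.+1) pconv p j l z.

Lemma F_neg l z m : z < 0 -> F l z m = 0.
Proof. by move=> hz; rewrite /F big1 // => j _; rewrite pconv_neg. Qed.

Lemma alphaE l z m : alpha p l z m%:R = F l z m.
Proof. by rewrite /alpha ler0n natrK. Qed.

Lemma shiftS (n k : nat) m :
  \sum_(w < n.+1) rdd q p (n%:Z - k%:Z - w%:Z) * F (n%:Z - k%:Z) w m
  = \sum_(i < n.+1) rdd q p (n%:Z - i%:Z) * F (n%:Z - k%:Z) (i%:Z - k%:Z) m.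
Proof.
rewrite -(zsum_range (fun w => rdd q p (n%:Z - k%:Z - w) * F (n%:Z - k%:Z) w m) 0 n); last first.
  move=> z hz; case: (ltrP z 0) => h; first by rewrite F_neg ?mulr0.
  rewrite rdd_neg ?mul0r //; lia.
rewrite -(zsum_range (fun i => rdd q p (n%:Z - i) * F (n%:Z - k%:Z) (i - k%:Z) m) 0 n); last first.
  move=> z hz; case: (ltrP z k%:Z) => h; first by rewrite F_neg ?mulr0 // subr_lt0.
  rewrite rdd_neg ?mul0r //; lia.
rewrite -[RHS](zsum_shift _ k%:Z); congr zsum; apply: funext => z.
by rewrite addrK; congr (rdd _ _ _ * _); lia.
Qed.

Lemma mainl m : forall l, qit q p m l = zsum (fun z => rdd q p (l - z) * F l z m).
Proof.
elim: m => [|m IH] l.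
  rewrite /= (zsum_range _ 0 0) => [|z hz]; last first.
    by rewrite /F big_ord1 /= /ind ifF ?mulr0 //; apply/eqP; lia.
  by rewrite big_ord1 /F big_ord1 /= subr0 mulr1.
case: l => n; last first.
  rewrite qit_neg //.
  rewrite /zsum fsbig1 // => z _; case: (ltrP z 0) => hz; first by rewrite F_neg ?mulr0.
  rewrite rdd_neg ?mul0r //; rewrite NegzE; lia.
rewrite /= (zsum_range (fun z => qit q p m (n%:Z - z) * pdd p n z) 0 n); last first.
  move=> z hz; case: (ltrP z 0) => h; first by rewrite pdd_negz ?mulr0.
  rewrite qit_neg ?mul0r //; lia.
rewrite (zsum_range _ 0 n); last first.
  move=> z hz; case: (ltrP z 0) => h; first by rewrite F_neg ?mulr0.
  rewrite rdd_neg ?mul0r //; lia.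
have E1 : forall i : 'I_n.+1, F n%:Z i%:Z m.+1 = ind R (i%:Z == 0)
    + \sum_(k < n.+1) pdd p n k * F (n%:Z - k%:Z) (i%:Z - k%:Z) m.
  move=> i; rewrite /F big_ord_recl /=; congr (_ + _).
  rewrite (eq_bigr (fun j : 'I_m.+1 => \sum_(k<n.+1) pdd p n k * pconv p j (n%:Z - k%:Z) (i%:Z - k%:Z))); last first.
    move=> j _; rewrite /= (zsum_range _ 0 n) //.
    move=> z hz; case: (ltrP z 0) => h; first by rewrite pdd_negz ?mul0r.
    rewrite pconv_neg ?mulr0 //; have := ltn_ord i; lia.
  by rewrite exchange_big; apply: eq_bigr => k _; rewrite mulr_sumr.
rewrite [RHS](eq_bigr (fun i : 'I_n.+1 => rdd q p (n%:Z - i%:Z) * ind R (i%:Z == 0) + rdd q p (n%:Z - i%:Z) * \sum_(k < n.+1) pdd p n k * F (n%:Z - k%:Z) (i%:Z - k%:Z) m)); last by move=> i _; rewrite add0r E1 mulrDr.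
rewrite big_split /= [X in _ = X + _]big_ord_recl /= subr0.
rewrite [X in _ = _ + X + _]big1 ?addr0; last by move=> i _; rewrite /ind /bump /= add1n mulr0.
rewrite mulr1; congr (_ + _).
rewrite [RHS](eq_bigr (fun i : 'I_n.+1 => \sum_(k < n.+1) rdd q p (n%:Z - i%:Z) * (pdd p n k * F (n%:Z - k%:Z) (i%:Z - k%:Z) m))); last by move=> i _; rewrite mulr_sumr.
rewrite [RHS]exchange_big; apply: eq_bigr => k _ /=.
rewrite add0r IH (zsum_range _ 0 n); last first.
  move=> z hz; case: (ltrP z 0) => h; first by rewrite F_neg ?mulr0.
  rewrite rdd_neg ?mul0r //; have := ltn_ord k; lia.
rewrite (_ : \sum_(w < n.+1) rdd q p (n%:Z - k%:Z - (0 + w%:Z)) * F (n%:Z - k%:Z) (0 + w%:Z) m = \sum_(w < n.+1) rdd q p (n%:Z - k%:Z - w%:Z) * F (n%:Z - k%:Z) w m); last by apply: eq_bigr => w _; rewrite add0r.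
rewrite shiftS mulr_suml; apply: eq_bigr => i _.
by rewrite -mulrA; congr (_ * _); apply: mulrC.
Qed.
End S.

Theorem lemma2 (R : realType) (q : int -> R[i]%C) (p : int -> int -> R[i]%C)
  (hq : forall l : int, l < 0 -> q l = 0)
  (hp : forall l z : int, z < 0 -> p l z = 0)
  (hL0 : p 0 0 != 0) :
  forall (l : int) (m : nat),
    qit q p m l = zsum (fun z => rdd q p (l - z) * alpha p l z m%:R).
Proof.
move=> l m; rewrite (@mainl R q p hp).
by congr zsum; apply: funext => z; rewrite alphaE.
Qed.
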